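(* Let $\Sigma=\{s_1<s_2<\cdots<s_l\}$ be a set of positive integers with $s_1=1$ and $s_i-s_{i-1}\le 2$ for all $i=2,\ldots,l$. Then $\Sigma$ is a $\delta$-set. Furthermore, there is a caterpillar of order $2l$ that admits a distance $\Sigma$-labeling in which every element of $\Sigma$ is the label of exactly two vertices.
   Context: All graphs are finite and simple; $d(u,v)$ denotes the usual graph distance. For a set $J$ of nonnegative integers, a distance $J$-labeling of $G$ is a function $f:V(G)\to J$ with $f(V(G))=J$ such that whenever two distinct vertices $u,v$ satisfy $f(u)=f(v)=k$, we have $d(u,v)=k$. It is proper if every $k\in J\setminus\{0\}$ is the label of at least two vertices. A finite set $\Sigma$ of nonnegative integers is a $\delta$-set if there exists a graph admitting a proper distance $\Sigma$-labeling. A caterpillar is a tree in which the vertices that are not leaves induce a path (possibly empty). *)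

(* Defs.v *)
From mathcomp Require Import all_boot.
Set Implicit Arguments. Unset Strict Implicit. Unset Printing Implicit Defensive.

Definition simple_graph (T : finType) (e : rel T) : Prop :=
  symmetric e /\ irreflexive e.

Definition walk_of_len (T : finType) (e : rel T) (u v : T) (k : nat) : Prop :=
  exists p : seq T, [/\ path e u p, last u p = v & size p = k].

(* d(u,v) = k : the shortest walk from u to v has length k
   (never holds for vertices in different components). *)
Definition dist_is (T : finType) (e : rel T) (u v : T) (k : nat) : Prop :=
  walk_of_len e u v k /\ forall j, j < k -> ~ walk_of_len e u v j.

Definition distance_labeling (T : finType) (e : rel T) (J : seq nat) (f : T -> nat) : Prop :=
  [/\ forall x, f x \in J,
      forall k, k \in J -> exists x, f x = k &
      forall u v, u != v -> f u = f v -> dist_is e u v (f u)].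

Definition proper_distance_labeling (T : finType) (e : rel T) (J : seq nat) (f : T -> nat) : Prop :=
  distance_labeling e J f /\
  forall k, k \in J -> k != 0 -> 1 < #|[pred x | f x == k]|.

Definition delta_set (J : seq nat) : Prop :=
  exists (T : finType) (e : rel T),
    simple_graph e /\ exists f : T -> nat, proper_distance_labeling e J f.

Definition connected_graph (T : finType) (e : rel T) : Prop :=
  forall u v : T, exists k, walk_of_len e u v k.

Definition acyclic (T : finType) (e : rel T) : Prop :=
  ~ exists (x : T) (p : seq T),
      [/\ 2 <= size p, uniq (x :: p), path e x p & e (last x p) x].

Definition tree (T : finType) (e : rel T) : Prop :=
  simple_graph e /\ connected_graph e /\ acyclic e.

Definition degree (T : finType) (e : rel T) (x : T) : nat := #|[pred y | e x y]|.

(* Caterpillar: a tree whose non-leaf vertices (degree <> 1) induce a path (possibly empty),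
   i.e. they can be listed without repetition as q so that two of them are adjacent
   iff they are consecutive in q. *)
Definition caterpillar (T : finType) (e : rel T) : Prop :=
  tree e /\
  exists q : seq T,
    [/\ uniq q,
        forall x, (x \in q) = (degree e x != 1) &
        forall x y, x \in q -> y \in q ->
          e x y = ((index x q).+1 == index y q) || ((index y q).+1 == index x q)].

(* Main.v *)
Require Import Defs.
From mathcomp Require Import all_boot zify.
Set Implicit Arguments. Unset Strict Implicit. Unset Printing Implicit Defensive.

Definition good (s : seq nat) : Prop :=
  [/\ sorted ltn s, head 0 s = 1 &
      forall i, 0 < i < size s -> nth 0 s i - nth 0 s i.-1 <= 2].


Lemma g_size s : good s -> 0 < size s.
Proof. by case: s => [|x s] [] . Qed.

Lemma g_a0 s : good s -> nth 0 s 0 = 1.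
Proof. by case: s => [|x s] [] . Qed.

Lemma g_step s i : good s -> i.+1 < size s ->
  nth 0 s i < nth 0 s i.+1 <= (nth 0 s i).+2.
Proof.
case=> Hso _ Hg Hi.
have H1 : nth 0 s i < nth 0 s i.+1.
  apply: (sorted_ltn_nth ltn_trans 0 Hso) => //; rewrite inE; lia.
have := Hg i.+1; rewrite /= => H2.
have {}H2 := H2 Hi. lia.
Qed.

Lemma g_mono s i j : good s -> i <= j -> j < size s ->
  nth 0 s i + (j - i) <= nth 0 s j.
Proof.
move=> Hs Hij; elim: j Hij => [|j IH] Hij Hj.
  have -> : i = 0 by lia. by rewrite addn0.
case: (ltnP i j.+1) => Hc.
  have := IH (ltac:(lia)) (ltac:(lia)); have := g_step Hs Hj; lia.
have -> : i = j.+1 by lia. rewrite subnn addn0 //.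
Qed.

Lemma g_ge s i : good s -> i < size s -> i < nth 0 s i.
Proof.
move=> Hs Hi; have := g_mono Hs (leq0n i) Hi; rewrite (g_a0 Hs); lia.
Qed.

Definition V (s : seq nat) := ('I_(size s) * bool)%type.

Definition rk s (v : V s) : nat :=
  (size s).-1 - v.1 + (if v.2 then nth 0 s v.1 else 0).
Definition sp s (v : V s) : bool :=
  ~~ v.2 || (nth 0 s v.1.+1 != (nth 0 s v.1).+1).
Definition ed s : rel (V s) := fun u v =>
  [|| sp u && sp v && ((rk u == (rk v).+1) || (rk v == (rk u).+1)),
      ~~ sp u && sp v && (rk u == (rk v).+1) |
      sp u && ~~ sp v && (rk v == (rk u).+1)].
Definition MM s := nth 0 s (size s).-1.

Lemma ed_sym s : symmetric (@ed s).
Proof.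
move=> u v; rewrite /ed; case: (sp u); case: (sp v); rewrite /= ?orbF //; by rewrite orbC.
Qed.

Lemma ed_irr s : irreflexive (@ed s).
Proof.
move=> u; have H : (rk u == (rk u).+1) = false by lia.
by rewrite /ed H; case: (sp u).
Qed.

Lemma rk_le s (v : V s) : good s -> rk v <= MM s.
Proof.
move=> Hs; case: v => [[i Hi] []]; rewrite /rk /MM /=.
  have := g_mono Hs (i:=i) (j:=(size s).-1) (ltac:(lia)) (ltac:(lia)); lia.
have := g_ge Hs (i:=(size s).-1) (ltac:(lia)); lia.
Qed.

Lemma leaf_info s (v : V s) : good s -> ~~ sp v ->
  [/\ v.2, v.1.+1 < size s, nth 0 s v.1.+1 = (nth 0 s v.1).+1 & size s <= rk v].
Proof.
move=> Hs; case: v => [[i Hi] b]; rewrite /sp /rk /=.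
case: b => //= /negPn /eqP H.
have Hi1 : i.+1 < size s.
  case: (ltnP i.+1 (size s)) => // Hc.
  by move: H; rewrite nth_default.
split => //. have := g_ge Hs Hi. lia.
Qed.

Lemma sp_y s (i : 'I_(size s)) : good s -> sp (i, true) ->
  i.+1 < size s -> nth 0 s i.+1 = (nth 0 s i).+2.
Proof.
move=> Hs; rewrite /sp /= => /eqP H Hi; have := g_step Hs Hi; lia.
Qed.

Lemma sp_inj s (u v : V s) : good s -> sp u -> sp v -> rk u = rk v -> u = v.
Proof.
move=> Hs.
have key : forall i j : 'I_(size s), i < j -> sp (i,true) ->
    rk (i,true) < rk (j,true).
  move=> i j Hij Hsi; rewrite /rk /=.
  have Hi1 : i.+1 < size s by have := ltn_ord j; lia.
  have := sp_y Hs Hsi Hi1.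
  have := g_mono Hs (i:=i.+1) (j:=j) Hij (ltn_ord j). lia.
case: u => [i []]; case: v => [j []] Hu Hv.
- case: (ltngtP i j) => Hij.
  + by have := key _ _ Hij Hu; lia.
  + by have := key _ _ Hij Hv; lia.
  + by move=> _; congr pair; apply: val_inj.
- rewrite /rk /=; have := g_ge Hs (ltn_ord i); lia.
- rewrite /rk /=; have := g_ge Hs (ltn_ord j); lia.
- rewrite /rk /= => H; congr pair; apply: val_inj => /=.
  have := ltn_ord i; have := ltn_ord j; lia.
Qed.

Lemma cover s p : good s -> p <= MM s -> exists v : V s, sp v && (rk v == p).
Proof.
move=> Hs Hp; have Hl := g_size Hs.
case: (ltnP p (size s)) => Hpl.
  have Hi : (size s).-1 - p < size s by lia.
  exists (Ordinal Hi, false); rewrite /rk /sp /=; apply/eqP; lia.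
pose P := fun i => (i < size s) && ((size s).-1 - i + nth 0 s i <= p).
have exP : exists i, P i.
  exists 0; rewrite /P Hl (g_a0 Hs) /=; lia.
have ubP : forall i, P i -> i <= size s by move=> i /andP[]; lia.
case: (ex_maxnP exP ubP) => i /andP [Hi Hr] Hmax.
exists (Ordinal Hi, true); rewrite /rk /sp /=.
case: (ltnP i.+1 (size s)) => Hi1.
- have Hn : ~~ P i.+1 by apply/negP => /Hmax; lia.
  move: Hn; rewrite /P Hi1 /= -ltnNge => Hn.
  have := g_step Hs Hi1. move=> Hst.
  apply/andP; split; [apply/eqP|apply/eqP]; lia.
- have -> : i = (size s).-1 by lia.
  rewrite nth_default /=; last by lia.
  move: Hp Hr; rewrite /MM; have -> : i = (size s).-1 by lia. lia.
Qed.

Lemma walk0 (T : finType) (e : rel T) u : walk_of_len e u u 0.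
Proof. by exists [::]. Qed.

Lemma walk_rcons (T : finType) (e : rel T) u v w k :
  walk_of_len e u v k -> e v w -> walk_of_len e u w k.+1.
Proof.
case=> p [Hp Hl Hs] He; exists (rcons p w).
by rewrite rcons_path Hp Hl He last_rcons size_rcons Hs.
Qed.

Lemma walk_cons (T : finType) (e : rel T) u v w k :
  e u v -> walk_of_len e v w k -> walk_of_len e u w k.+1.
Proof. move=> He [p [Hp Hl Hs]]; exists (v :: p) => /=; by rewrite He Hp Hl Hs. Qed.

Lemma walk_trans (T : finType) (e : rel T) u v w j k :
  walk_of_len e u v j -> walk_of_len e v w k -> walk_of_len e u w (j + k).
Proof.
case=> p [Hp Hl Hs] [q [Hq Hl' Hs']]; exists (p ++ q).
by rewrite cat_path last_cat Hl Hp Hq Hl' size_cat Hs Hs'.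
Qed.

Lemma walk_sym (T : finType) (e : rel T) u v k : symmetric e ->
  walk_of_len e u v k -> walk_of_len e v u k.
Proof.
move=> Hsym [p [Hp Hl Hs]]; elim: p u k Hp Hl Hs => [|x p IH] u k /=.
  by move=> _ <- <-; exact: walk0.
move=> /andP [Hux Hp] Hl Hs.
have := IH x (size p) Hp Hl erefl.
move=> H; rewrite -Hs; apply: walk_rcons H _; by rewrite Hsym.
Qed.

Lemma seq_max (T : eqType) (r : T -> nat) (c : seq T) :
  c != [::] -> exists2 z, z \in c & forall w, w \in c -> r w <= r z.
Proof.
elim: c => [|x c IH] //= _.
case: (altP (c =P [::])) => [->|Hc].
  by exists x => [|w]; rewrite ?inE // => /eqP ->.
case: (IH Hc) => z Hz Hm.
case: (leqP (r x) (r z)) => Hxz.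
  exists z; first by rewrite inE Hz orbT.
  by move=> w; rewrite inE => /orP [/eqP ->|/Hm].
exists x; first by rewrite inE eqxx.
move=> w; rewrite inE => /orP [/eqP ->//|/Hm]; lia.
Qed.

Lemma acyclic_rank (T : finType) (e : rel T) (r : T -> nat) :
  symmetric e ->
  (forall u v, e u v -> r u != r v) ->
  (forall z w1 w2, e z w1 -> e z w2 -> r w1 < r z -> r w2 < r z -> w1 = w2) ->
  acyclic e.
Proof.
move=> Hsym Hne Huniq [x [p [Hsz Hu Hp He]]].
have Hc : cycle e (x :: p) by rewrite /cycle rcons_path Hp He.
have [z Hz Hmax] := seq_max r (isT : x :: p != [::]).
case: (rot_to Hz) => i c' Hrot.
have Hc' : cycle e (z :: c') by rewrite -Hrot rot_cycle.
have Hu' : uniq (z :: c') by rewrite -Hrot rot_uniq.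
have Hsz' : size c' = size p by have := congr1 size Hrot; rewrite size_rot /= => [[]].
have Hmem : forall w, w \in z :: c' -> r w <= r z.
  by move=> w Hw; apply: Hmax; rewrite -(mem_rot i) Hrot.
clear Hrot Hc Hmax Hz Hu Hp He.
case: c' Hc' Hu' Hsz' Hmem => [|a [|b c'']] //=; first by move=> _ _ Hs; lia.
  by move=> _ _ Hs; lia.
move=> Hc' Hu' _ Hmem.
have : path e z (rcons [:: a, b & c''] z) := Hc'.
rewrite rcons_path => /andP [/andP [Hza _] Hlz].
have Hlz' : e z (last b c'') by rewrite Hsym.
have Ha : r a < r z.
  have := Hmem a; rewrite !inE eqxx orbT => /(_ isT).
  have := Hne _ _ Hza; lia.
have Hl : r (last b c'') < r z.
  have Hin : last b c'' \in b :: c'' by exact: mem_last.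
  have := Hmem (last b c''); rewrite inE (_ : last b c'' \in [:: a, b & c''] = true) ?orbT => [/(_ isT)|]; last by rewrite inE Hin orbT.
  have := Hne _ _ Hlz'; lia.
have := Huniq _ _ _ Hza Hlz' Ha Hl => Heq.
move: Hu'; rewrite [uniq _]/= => /andP [_ /andP [Hna _]].
have Hin : last b c'' \in b :: c'' by exact: mem_last.
by move: Hna; rewrite Heq Hin.
Qed.

Lemma ed_rk s (u v : V s) : ed u v -> rk u = (rk v).+1 \/ rk v = (rk u).+1.
Proof.
rewrite /ed; case: (sp u); case: (sp v); rewrite /= ?orbF //;
  try (move=> /orP [] /eqP H); try (move=> /eqP H); lia.
Qed.

Lemma ed_lower s (z w : V s) : ed z w -> rk w < rk z -> sp w && (rk z == (rk w).+1).
Proof.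
rewrite /ed; case: (sp z); case: (sp w); rewrite /= ?orbF //;
  try (move=> /orP [] /eqP H); try (move=> /eqP H); lia.
Qed.

Lemma ed_sp s (u v : V s) : sp u -> sp v ->
  ed u v = (rk u == (rk v).+1) || (rk v == (rk u).+1).
Proof. by move=> Hu Hv; rewrite /ed Hu Hv /= !orbF. Qed.

Lemma ed_acyclic s : good s -> acyclic (@ed s).
Proof.
move=> Hs; apply: (acyclic_rank (r := @rk s)) => [|u v|z w1 w2].
- exact: ed_sym.
- by move/ed_rk; lia.
- move=> H1 H2 L1 L2.
  have /andP [S1 /eqP E1] := ed_lower H1 L1.
  have /andP [S2 /eqP E2] := ed_lower H2 L2.
  apply: sp_inj Hs S1 S2 _; lia.
Qed.

Definition at_ s (v0 : V s) p := odflt v0 [pick v : V s | sp v && (rk v == p)].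

Lemma at_spec s (v0 : V s) p : good s -> p <= MM s ->
  sp (at_ v0 p) /\ rk (at_ v0 p) = p.
Proof.
move=> Hs Hp; rewrite /at_; case: pickP => [v /andP [H1 /eqP H2]|H] //=.
have [v Hv] := cover Hs Hp; by rewrite H in Hv.
Qed.

Lemma at_rk s (v0 : V s) v : good s -> sp v -> at_ v0 (rk v) = v.
Proof.
move=> Hs Hv; have [H1 H2] := at_spec v0 Hs (rk_le v Hs).
exact: sp_inj Hs H1 Hv H2.
Qed.

Lemma spine_walk s (v0 : V s) p k : good s -> p + k <= MM s ->
  walk_of_len (@ed s) (at_ v0 p) (at_ v0 (p + k)) k.
Proof.
move=> Hs; elim: k => [|k IH] Hk; first by rewrite addn0; exact: walk0.
apply: walk_rcons (IH (ltac:(lia))) _.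
have [A1 A2] := at_spec v0 Hs (ltac:(lia) : p + k <= MM s).
have [B1 B2] := at_spec v0 Hs (ltac:(lia) : p + k.+1 <= MM s).
rewrite ed_sp // A2 B2; apply/orP; right; apply/eqP; lia.
Qed.

Lemma walk_bound s (p : seq (V s)) u : path (@ed s) u p ->
  rk (last u p) <= rk u + size p /\ rk u <= rk (last u p) + size p.
Proof.
elim: p u => [|x p IH] u /=; first by rewrite !addn0.
move=> /andP [H /IH [H1 H2]]; have := ed_rk H; lia.
Qed.

Lemma walk_to s (v0 : V s) (u : V s) : good s -> exists k, walk_of_len (@ed s) (at_ v0 0) u k.
Proof.
move=> Hs; case Hu: (sp u).
  exists (rk u); have := spine_walk v0 (p := 0) (k := rk u) Hs (rk_le u Hs).
  by rewrite add0n at_rk.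
have [L1 L2 L3 L4] := leaf_info Hs (negbT Hu).
have Hle := rk_le u Hs.
exists (rk u).-1.+1; apply: walk_rcons.
  exact: (spine_walk v0 (p := 0) (k := (rk u).-1) Hs (ltac:(lia))).
have [A1 A2] := at_spec v0 Hs (ltac:(lia) : 0 + (rk u).-1 <= MM s).
rewrite /ed A1 Hu /= A2; apply/eqP; lia.
Qed.

Lemma ed_connected s (v0 : V s) : good s -> connected_graph (@ed s).
Proof.
move=> Hs u v; have [j Hj] := walk_to v0 u Hs; have [k Hk] := walk_to v0 v Hs.
exists (j + k); apply: walk_trans _ Hk; exact: walk_sym (@ed_sym s) Hj.
Qed.

Lemma pair_dist s (v0 : V s) (i : 'I_(size s)) : good s ->
  dist_is (@ed s) (i, false) (i, true) (nth 0 s i).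
Proof.
move=> Hs; have Hle := rk_le (i, true) Hs.
have Hsx : sp (i, false) by [].
have Hrx : rk (i, false) = (size s).-1 - i by rewrite /rk /= addn0.
have Hry : rk (i, true) = (size s).-1 - i + nth 0 s i by [].
split.
  have Ha := g_ge Hs (ltn_ord i).
  case Hy: (sp (i, true)).
  - have := spine_walk v0 (p := (size s).-1 - i) (k := nth 0 s i) Hs (ltac:(lia)).
    by rewrite -Hry -Hrx !at_rk.
  - have -> : nth 0 s i = (nth 0 s i).-1.+1 by lia.
    apply: (walk_rcons (v := at_ v0 ((size s).-1 - i + (nth 0 s i).-1))).
    + have := spine_walk v0 (p := (size s).-1 - i) (k := (nth 0 s i).-1) Hs (ltac:(lia)).
      by rewrite -{1}Hrx at_rk.
    + have [A1 A2] := at_spec v0 Hs (ltac:(lia) : (size s).-1 - i + (nth 0 s i).-1 <= MM s).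
      rewrite /ed A1 Hy /= A2 Hry; apply/eqP; lia.
move=> j Hj [p [Hp Hl Hsz]]; have [H1 _] := walk_bound Hp.
move: H1; rewrite Hl Hsz Hrx Hry; lia.
Qed.

Lemma MM_ge s : good s -> size s <= MM s.
Proof. move=> Hs; have := g_ge Hs (i := (size s).-1); rewrite /MM; have := g_size Hs; lia. Qed.

Definition qq s (v0 : V s) := [seq at_ v0 p | p <- iota 1 (MM s).-1].

Lemma in_qq s (v0 : V s) x : good s -> (x \in qq v0) = sp x && (0 < rk x < MM s).
Proof.
move=> Hs; apply/idP/idP.
  case/mapP => p; rewrite mem_iota => Hp ->.
  have [H1 H2] := at_spec v0 Hs (ltac:(lia) : p <= MM s); rewrite H1 H2; lia.
case/andP => Hx Hr; apply/mapP; exists (rk x); last by rewrite at_rk.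
rewrite mem_iota; lia.
Qed.

Lemma uniq_qq s (v0 : V s) : good s -> uniq (qq v0).
Proof.
move=> Hs; rewrite map_inj_in_uniq ?iota_uniq // => p p'; rewrite !mem_iota => Hp Hp' E.
have [_ H1] := at_spec v0 Hs (ltac:(lia) : p <= MM s).
have [_ H2] := at_spec v0 Hs (ltac:(lia) : p' <= MM s).
by rewrite -H1 -H2 E.
Qed.

Lemma index_qq s (v0 : V s) x : good s -> x \in qq v0 -> index x (qq v0) = (rk x).-1.
Proof.
move=> Hs Hx; have := Hx; rewrite in_qq // => /andP [Hsx Hr].
have Hk : (rk x).-1 < size (qq v0) by rewrite size_map size_iota; lia.
have := index_uniq v0 Hk (uniq_qq v0 Hs).
rewrite (nth_map 0) ?size_iota; last lia.
rewrite nth_iota; last lia.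
by rewrite (_ : 1 + (rk x).-1 = rk x) ?at_rk //; lia.
Qed.

Lemma deg1 s (x w : V s) : (forall y, ed x y = (y == w)) -> degree (@ed s) x = 1.
Proof.
move=> H; rewrite /degree -(card1 w); apply: eq_card => y; by rewrite !inE H.
Qed.

Lemma degree_q s (v0 : V s) x : good s -> (x \in qq v0) = (degree (@ed s) x != 1).
Proof.
move=> Hs; rewrite in_qq //; have Hle := rk_le x Hs; have HM := MM_ge Hs.
have Hl := g_size Hs.
case Hx: (sp x) => /=.
- case: (ltnP 0 (rk x)) => H0; case: (ltnP (rk x) (MM s)) => H1 /=.
  +
    have [A1 A2] := at_spec v0 Hs (ltac:(lia) : (rk x).-1 <= MM s).
    have [B1 B2] := at_spec v0 Hs (ltac:(lia) : (rk x).+1 <= MM s).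
    have Hne : at_ v0 (rk x).-1 != at_ v0 (rk x).+1.
      apply/eqP => E; move: A2; rewrite E B2; lia.
    apply/esym/negP => /eqP Hd.
    have : #|pred2 (at_ v0 (rk x).-1) (at_ v0 (rk x).+1)| <= degree (@ed s) x.
      apply: subset_leq_card; apply/subsetP => y; rewrite !inE.
      by case/orP => /eqP ->; rewrite ed_sp // ?A2 ?B2; apply/orP; [left|right]; apply/eqP; lia.
    by rewrite card2 Hne Hd.
  + have Ex : rk x = MM s by lia.
    apply/esym/negPn/eqP; apply: (deg1 (w := at_ v0 (MM s).-1)) => y.
    have [A1 A2] := at_spec v0 Hs (ltac:(lia) : (MM s).-1 <= MM s).
    apply/idP/idP.
    * move=> Hxy; have := rk_le y Hs; case: (ed_rk Hxy) => E Hy; last lia.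
      have /andP [Sy _] := ed_lower Hxy (ltac:(lia)).
      apply/eqP; rewrite -(at_rk v0 Hs Sy); congr at_; lia.
    * move/eqP ->; rewrite ed_sp // A2; apply/orP; left; apply/eqP; lia.
  + have Ex : rk x = 0 by lia.
    apply/esym/negPn/eqP; apply: (deg1 (w := at_ v0 1)) => y.
    have [A1 A2] := at_spec v0 Hs (ltac:(lia) : 1 <= MM s).
    apply/idP/idP.
    * move=> Hxy; case: (ed_rk Hxy) => E; first lia.
      case Sy: (sp y).
        apply/eqP; rewrite -(at_rk v0 Hs Sy); congr at_; lia.
      have [_ L2 _ L4] := leaf_info Hs (negbT Sy); lia.
    * move/eqP ->; rewrite ed_sp // A2; apply/orP; right; apply/eqP; lia.
  + lia.
- have [_ L2 _ L4] := leaf_info Hs (negbT Hx).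
  apply/esym/negPn/eqP; apply: (deg1 (w := at_ v0 (rk x).-1)) => y.
  have [A1 A2] := at_spec v0 Hs (ltac:(lia) : (rk x).-1 <= MM s).
  rewrite /ed Hx /= ?andbF /= ?orbF.
  apply/idP/idP.
  * case/andP => Sy /eqP E; apply/eqP; rewrite -(at_rk v0 Hs Sy); congr at_; lia.
  * move/eqP ->; rewrite A1 A2 /=; apply/eqP; lia.
Qed.

Lemma ed_caterpillar s (v0 : V s) : good s -> caterpillar (@ed s).
Proof.
move=> Hs; split.
  split; first by split; [exact: ed_sym | exact: ed_irr].
  by split; [exact: ed_connected v0 Hs | exact: ed_acyclic].
exists (qq v0); split.
- exact: uniq_qq.
- by move=> x; rewrite degree_q.
- move=> x y Hx Hy; rewrite !index_qq //.
  move: Hx Hy; rewrite !in_qq // => /andP [Sx Rx] /andP [Sy Ry].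
  rewrite ed_sp //.
  apply/idP/idP => /orP [] /eqP E; apply/orP; (left; apply/eqP; lia) || (right; apply/eqP; lia).
Qed.

Lemma lab_inj s (i j : 'I_(size s)) : good s -> nth 0 s i = nth 0 s j -> i = j.
Proof.
case=> Hso _ _ E; apply: val_inj => /=.
have Hu : uniq s by apply: sorted_uniq Hso; [exact: ltn_trans | exact: ltnn].
by apply/eqP; rewrite -(nth_uniq 0 (ltn_ord i) (ltn_ord j) Hu) E.
Qed.

Lemma lab_card s k : good s -> k \in s ->
  #|[pred x : V s | nth 0 s x.1 == k]| = 2.
Proof.
move=> Hs Hk; have Hi : index k s < size s by rewrite index_mem.
pose i := Ordinal Hi.
have -> : 2 = #|pred2 (i, false) (i, true)| by rewrite card2 xpair_eqE andbF.
apply: eq_card => [[j b]].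
rewrite !inE /= -[k in _ == k](nth_index 0 Hk).
apply/idP/idP.
  move/eqP => E; have := lab_inj Hs (i := j) (j := i) E => ->.
  by case: b; rewrite eqxx ?orbT.
by case/orP => /eqP [-> _].
Qed.

Lemma labeling s : good s ->
  distance_labeling (@ed s) s (fun x : V s => nth 0 s x.1).
Proof.
move=> Hs; split.
- by move=> x; apply: mem_nth.
- move=> k Hk; have Hi : index k s < size s by rewrite index_mem.
  by exists (Ordinal Hi, false); rewrite /= nth_index.
- move=> [i b] [j c] Hne /= E; have := lab_inj Hs E => Eij; subst j.
  have v0 : V s := (i, false).
  case: b c Hne => [] []; rewrite ?eqxx // => _.
  + have [W L] := pair_dist v0 i Hs.
    split; first exact: walk_sym (@ed_sym s) W.
    move=> j Hj /(walk_sym (@ed_sym s)); exact: L.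
  + exact: pair_dist v0 i Hs.
Qed.

Theorem mainTheorem8 (s : seq nat)
  (Hsorted : sorted ltn s)
  (Hhead : head 0 s = 1)
  (Hgap : forall i, 0 < i < size s -> nth 0 s i - nth 0 s i.-1 <= 2) :
  delta_set s /\
  exists (T : finType) (e : rel T),
    [/\ caterpillar e,
        #|T| = 2 * size s &
        exists f : T -> nat,
          distance_labeling e s f /\
          forall k, k \in s -> #|[pred x | f x == k]| = 2].
Proof.
have Hs : good s by split.
have Hl := g_size Hs.
pose v0 : V s := (Ordinal Hl, false).
have Hcat := ed_caterpillar v0 Hs.
split.
  exists (V s), (@ed s); split; first by case: Hcat => [[]].
  exists (fun x : V s => nth 0 s x.1); split; first exact: labeling.
  move=> k Hk _; by rewrite (lab_card Hs Hk).
exists (V s), (@ed s); split => //.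
  by rewrite card_prod card_ord card_bool mulnC.
exists (fun x : V s => nth 0 s x.1); split; first exact: labeling.
by move=> k Hk; apply: lab_card.
Qed.
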